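(* Let $h\ge r$ be positive integers and let $0<\beta<1$ be a real. There exists a positive real $\alpha$ depending on $h,r,\beta$ such that the following holds. Let $G$ be any graph on $n$ vertices and let $p=p_r(G)$. For $0\le i\le h$ and $1\le j\le h$, let $\mathcal{A}_{i,j}$ denote the set of $i$-good sequences of length $j$ relative to $(\alpha,\beta,h,r)$ in $V(G)$, and let $\mathcal{B}_{i,j}=V(G)^j\setminus\mathcal{A}_{i,j}$. Then for each $0\le i\le h$, $1\le j\le h$ and $1\le\ell\le j$, \[\sum_{S\in\mathcal{B}_{i,j}}|N(S)|^\ell\le\beta\,n^{j+\ell}p^{j\ell}.\]
   Context: All graphs are finite and simple. For a positive integer $r$, $p_r(G)=t_{K_{1,r}}(G)^{1/r}=\frac1n\left(\frac1n\sum_{v\in V(G)}d(v)^r\right)^{1/r}$ where $n=|G|$. A sequence in a set $W$ is a finite sequence of elements of $W$ (repetitions allowed); its length $|S|$ counts multiplicity; $W^k$ denotes the set of sequences of length $k$ in $W$. For a sequence $S$ in $V(G)$, $N(S)$ is the set of vertices adjacent to every vertex of $S$. Goodness: fix reals $0<\alpha,\beta<1$ and positive integers $h,r$, and let $p=p_r(G)$. A sequence $T$ in $V(G)$ is $0$-good if $|N(T)|\ge\alpha p^{|T|}n$. For $1\le i\le h$, a sequence $S$ in $V(G)$ of length at most $h$ is $i$-good if $S$ is $0$-good and for each $|S|\le k\le h$, the number of $(i-1)$-good sequences in $N(S)^k$ is at least $(1-\beta)|N(S)|^k$. These are called $i$-good relative to $(\alpha,\beta,h,r)$. *)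

(* Defs.v *)
From HB Require Import structures.
From mathcomp Require Import all_boot all_order all_algebra.
From mathcomp Require Import reals exp.
Set Implicit Arguments. Unset Strict Implicit. Unset Printing Implicit Defensive.
Import Order.TTheory GRing.Theory Num.Theory.
Local Open Scope ring_scope.

(* A finite simple graph is a symmetric irreflexive relation e on a finType T;
   V(G) = T and n = #|T|. *)
Definition simple_graph (T : finType) (e : rel T) : Prop :=
  symmetric e /\ irreflexive e.

Definition deg (T : finType) (e : rel T) (v : T) : nat := #|[set u | e v u]|.

Definition pr (R : realType) (T : finType) (e : rel T) (r : nat) : R :=
  let n : R := (#|T|)%:R in
  n^-1 * powR (n^-1 * \sum_(v : T) ((deg e v)%:R) ^+ r) (r%:R^-1).

Definition NS (T : finType) (e : rel T) (S : seq T) : {set T} :=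
  [set v | all (fun u => e u v) S].

Definition good0 (R : realType) (T : finType) (e : rel T) (alpha : R) (r : nat)
  (S : seq T) : bool :=
  alpha * (pr R e r) ^+ (size S) * (#|T|)%:R <= (#|NS e S|)%:R.

Fixpoint good (R : realType) (T : finType) (e : rel T) (alpha beta : R)
  (h r : nat) (i : nat) (S : seq T) : bool :=
  match i with
  | 0 => good0 e alpha r S
  | i'.+1 =>
      [&& (size S <= h)%N, good0 e alpha r S &
        [forall k : 'I_h.+1, (size S <= k)%N ==>
          ((1 - beta) * (#|NS e S|)%:R ^+ k <=
           (#|[set t : k.-tuple T |
                 all (fun x => x \in NS e S) t && good e alpha beta h r i' t]|)%:R)]]
  end.

(* Main.v *)
Require Import Defs.
From HB Require Import structures.
From mathcomp Require Import all_boot all_order all_algebra.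
From mathcomp Require Import reals exp.
From mathcomp Require Import ring lra zify.
Import Order.TTheory GRing.Theory Num.Theory.
Local Open Scope ring_scope.

Lemma card_all_tuple (T : finType) (A : {set T}) k :
  #|[set t : k.-tuple T | all (fun x => x \in A) t]| = (#|A| ^ k)%N.
Proof.
have inj : injective (@finfun_of_tuple T k) := can_inj (@finfun_of_tupleK T k).
rewrite -(card_imset _ inj) (can2_imset_pre _ (@finfun_of_tupleK T k) (@tuple_of_finfunK T k)).
rewrite -[in RHS](card_ord k) -card_ffun_on; apply: eq_card => f.
rewrite !inE; apply/allP/ffun_onP => H.
- move=> i; apply: H; rewrite /tuple_of_finfun /=; apply/mapP; exists i => //; exact: mem_enum.
- by move=> x /mapP [i _ ->]; apply: H.
Qed.

Lemma all_NS_sym (T : finType) (e : rel T) (S t : seq T) : symmetric e ->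
  all (fun x => x \in NS e S) t = all (fun x => x \in NS e t) S.
Proof.
move=> sym; apply/allP/allP => H x xin; rewrite inE; apply/allP => y yin.
- by have := H y yin; rewrite inE => /allP /(_ x xin); rewrite sym.
- by have := H y yin; rewrite inE => /allP /(_ x xin); rewrite sym.
Qed.

Lemma count_swap (T : finType) (e : rel T) j k (g : pred (k.-tuple T)) :
  symmetric e ->
  (\sum_(S : j.-tuple T) #|[set t : k.-tuple T | all (fun x => x \in NS e S) t && ~~ g t]|
   = \sum_(t : k.-tuple T | ~~ g t) #|NS e t| ^ j)%N.
Proof.
move=> sym.
under eq_bigr do rewrite -sum1dep_card big_mkcond /=.
rewrite exchange_big /= [RHS]big_mkcond /=; apply: eq_bigr => t _.
case: (g t) => /=.
- by apply: big1 => S _; rewrite andbF.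
rewrite -card_all_tuple -sum1dep_card [RHS]big_mkcond /=; apply: eq_bigr => S _.
by rewrite andbT all_NS_sym.
Qed.
Section Main.
Variables (R : realType) (T : finType) (e : rel T) (alpha beta : R) (h r : nat).
Hypothesis sym : symmetric e.
Hypothesis ha0 : 0 < alpha.
Hypothesis ha1 : alpha < 1.
Hypothesis hb0 : 0 < beta.
Hypothesis hb1 : beta < 1.

Let n : R := (#|T|)%:R.
Let p : R := pr R e r.
Let N (S : seq T) : R := (#|NS e S|)%:R.

Lemma p_ge0 : 0 <= p.
Proof. by rewrite /p /pr mulr_ge0 ?invr_ge0 ?ler0n ?powR_ge0. Qed.

Lemma n_ge0 : 0 <= n.
Proof. by rewrite /n ler0n. Qed.

Definition Cb i (eps : R) := forall j l : nat, (1 <= j <= h)%N -> (1 <= l <= j)%N ->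
      \sum_(S : j.-tuple T | ~~ good e alpha beta h r i S) ((#|NS e S|)%:R : R) ^+ l
        <= eps * (#|T|)%:R ^+ (j + l) * (pr R e r) ^+ (j * l).

Lemma Cb_mono i e1 e2 : e1 <= e2 -> Cb i e1 -> Cb i e2.
Proof.
move=> le H j l hj hl; apply: le_trans (H j l hj hl) _.
rewrite -!mulrA ler_wpM2r // mulr_ge0 ?exprn_ge0 ?n_ge0 ?p_ge0 //.
Qed.

Lemma sum_sub (I : finType) (P : pred I) (F : I -> R) :
  (forall i, 0 <= F i) -> \sum_(i | P i) F i <= \sum_i F i.
Proof.
move=> F0; rewrite big_mkcond /=; apply: ler_sum => i _.
by case: (P i).
Qed.

Lemma sum_const_tuple j (c : R) : \sum_(S : j.-tuple T) c = n ^+ j * c.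
Proof. by rewrite sumr_const card_tuple -mulr_natl natrX. Qed.

Lemma base_bound j l : (1 <= l)%N ->
  \sum_(S : j.-tuple T | ~~ good0 e alpha r S) N S ^+ l
     <= alpha * n ^+ (j + l) * p ^+ (j * l).
Proof.
move=> hl.
have X0 : 0 <= p ^+ j * n by rewrite mulr_ge0 ?exprn_ge0 ?p_ge0 ?n_ge0.
have H1 : \sum_(S : j.-tuple T | ~~ good0 e alpha r S) N S ^+ l <=
    \sum_(S : j.-tuple T | ~~ good0 e alpha r S) alpha * (p ^+ j * n) ^+ l.
  apply: ler_sum => S; rewrite /good0 size_tuple -ltNge => hS.
  have hN : N S ^+ l <= (alpha * (p ^+ j * n)) ^+ l.
    rewrite lerXn2r ?nnegrE ?ler0n ?mulr_ge0 ?(ltW ha0) ?exprn_ge0 ?p_ge0 ?n_ge0 //.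
    by apply/ltW; move: hS; rewrite /N /p /n -mulrA.
  apply: le_trans hN _; rewrite exprMn ler_wpM2r ?exprn_ge0 //.
  case: l hl => // l _; rewrite exprS ler_piMr ?exprn_ile1 ?(ltW ha0) ?(ltW ha1) //.
apply: (le_trans H1); apply: le_trans (sum_sub _ _ _ _) _.
  by move=> S; rewrite mulr_ge0 ?exprn_ge0 // ltW.
rewrite sum_const_tuple exprMn -exprM exprD le_eqVlt; apply/orP; left; apply/eqP; ring.
Qed.


Lemma card_split (U : finType) (P Q : pred U) :
  (#|[set x | P x && Q x]| + #|[set x | P x && ~~ Q x]| = #|[set x | P x]|)%N.
Proof. by rewrite -!sum1dep_card [in RHS](bigID Q). Qed.

Definition condk i (k : 'I_h.+1) (S : seq T) :=
  ~~ ((size S <= k)%N ==> ((1 - beta) * N S ^+ k <=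
     (#|[set t : k.-tuple T | all (fun x => x \in NS e S) t && good e alpha beta h r i t]|)%:R)).

Lemma decomp i j l : (j <= h)%N ->
  \sum_(S : j.-tuple T | ~~ good e alpha beta h r i.+1 S) N S ^+ l <=
  \sum_(S : j.-tuple T | ~~ good0 e alpha r S) N S ^+ l +
  \sum_(k : 'I_h.+1) \sum_(S : j.-tuple T | condk i k S) N S ^+ l.
Proof.
move=> hj.
under [X in _ <= _ + X]eq_bigr do rewrite big_mkcond /=.
rewrite exchange_big /= [X in _ <= X + _]big_mkcond /= -big_split /= big_mkcond /=.
apply: ler_sum => S _.
have f0 : 0 <= N S ^+ l by rewrite exprn_ge0 ?ler0n.
have s0 : 0 <= \sum_(k < h.+1) (if condk i k S then N S ^+ l else 0).
  by apply: sumr_ge0 => k _; case: ifP.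
case: ifP => hg; last by rewrite addr_ge0 //; case: ifP.
case: ifP => hg0; first by rewrite lerDl.
rewrite add0r; move/negbFE: hg0 => hg0; move: hg; rewrite /= size_tuple hj hg0 /= negb_forall => /existsP [k hk].
rewrite (bigD1 k) //= /condk size_tuple hk lerDl.
by apply: sumr_ge0 => kk _; case: ifP.
Qed.


Lemma bad_ge i k (S : seq T) : condk i k S ->
  N S ^+ k <= beta^-1 *
   (#|[set t : k.-tuple T | all (fun x => x \in NS e S) t && ~~ good e alpha beta h r i t]|)%:R.
Proof.
rewrite /condk negb_imply => /andP [_]; rewrite -ltNge => hlt.
have := card_split _ (fun t : k.-tuple T => all (fun x => x \in NS e S) t)
   (good e alpha beta h r i).
rewrite card_all_tuple => /(congr1 (fun m : nat => (m%:R : R))).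
rewrite natrD natrX -/(N S) => hsum.
rewrite ler_pdivlMl //.
set G := (X in X + _ = _) in hsum; set B := (X in _ + X = _) in hsum.
rewrite -/B; move: hlt; rewrite -/G => hlt.
nra.
Qed.

Lemma expr_split (x y : R) (k j l : nat) : (l <= j)%N -> (j <= k)%N ->
  x ^+ (k + j) * y ^+ (k * j) = (y ^+ j * x) ^+ (k - l) * (x ^+ (j + l) * y ^+ (j * l)).
Proof.
move=> hlj hjk.
rewrite exprMn -exprM.
have -> : (k + j = (k - l) + (j + l))%N by lia.
have -> : (k * j = j * (k - l) + j * l)%N by nia.
rewrite !exprD; ring.
Qed.

Lemma perk i eps c (k : 'I_h.+1) j l :
  0 < c -> c <= 1 -> 0 <= eps -> 0 < p -> 0 < n -> Cb i eps ->
  (1 <= j <= h)%N -> (1 <= l <= j)%N ->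
  \sum_(S : j.-tuple T | condk i k S) N S ^+ l <=
    (c + eps / (beta * c ^+ h)) * (n ^+ (j + l) * p ^+ (j * l)).
Proof.
move=> c0 c1 eps0 p0 n0 Ci /andP [hj1 hjh] /andP [hl1 hlj].
set X := n ^+ (j + l) * p ^+ (j * l).
have X0 : 0 < X by rewrite mulr_gt0 ?exprn_gt0.
have K0 : 0 <= c + eps / (beta * c ^+ h).
  apply: addr_ge0; first exact: ltW.
  by apply: divr_ge0 => //; apply: mulr_ge0; apply: ltW => //; apply: exprn_gt0.
case: (leqP j k) => hjk; last first.
  rewrite big_pred0; first by rewrite mulr_ge0 // ltW.
  by move=> S; rewrite /condk size_tuple leqNgt hjk.
set P := p ^+ j * n.
have P0 : 0 < P by rewrite mulr_gt0 ?exprn_gt0.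
set Q := c * P.
have Q0 : 0 < Q by rewrite mulr_gt0.
rewrite (bigID (fun S : j.-tuple T => N S < Q)) /= mulrDl.
apply: lerD.
  apply: (@le_trans _ _ (\sum_(S : j.-tuple T) Q ^+ l)).
    apply: (@le_trans _ _ (\sum_(S : j.-tuple T | condk i k S && (N S < Q)) Q ^+ l)).
      apply: ler_sum => S /andP [_ hS].
      by rewrite lerXn2r ?nnegrE ?ler0n ?ltW.
    by apply: sum_sub => S; rewrite exprn_ge0 ?ltW.
  rewrite sum_const_tuple /Q exprMn.
  have cl : c ^+ l <= c.
    by case: (l) hl1 => // lp _; rewrite exprS ler_piMr // ?exprn_ile1 // ltW.
  have -> : n ^+ j * (c ^+ l * P ^+ l) = c ^+ l * X.
    by rewrite /X /P exprMn -exprM exprD; ring.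
  by apply: ler_wpM2r => //; apply: ltW.
set B := \sum_(S | _) _.
have B0 : 0 <= B by apply: sumr_ge0 => S _; rewrite exprn_ge0 ?ler0n.
have key : Q ^+ (k - l) * B <= beta^-1 * (eps * n ^+ (k + j) * p ^+ (k * j)).
  rewrite /B mulr_sumr.
  apply: (@le_trans _ _ (\sum_(S : j.-tuple T | condk i k S && ~~ (N S < Q)) N S ^+ k)).
    apply: ler_sum => S /andP [_]; rewrite -leNgt => hS.
    have -> : N S ^+ k = N S ^+ (k - l) * N S ^+ l.
      by rewrite -exprD subnK // (leq_trans hlj hjk).
    rewrite ler_wpM2r ?exprn_ge0 ?ler0n //; apply: lerXn2r => //; rewrite nnegrE ?ler0n // ltW //.
  have H2 : \sum_(S : j.-tuple T | condk i k S && ~~ (N S < Q)) N S ^+ k <=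
     \sum_(S : j.-tuple T | condk i k S && ~~ (N S < Q))
     beta^-1 * (#|[set t : k.-tuple T | all (fun x => x \in NS e S) t
                   && ~~ good e alpha beta h r i t]|)%:R.
    by apply: ler_sum => S /andP [hc _]; apply: bad_ge.
  apply: (le_trans H2).
  apply: le_trans (sum_sub _ _ _ _) _.
    by move=> S; rewrite mulr_ge0 ?invr_ge0 ?ler0n ?ltW.
  rewrite -mulr_sumr; apply: ler_wpM2l; first by rewrite invr_ge0 ltW.
  rewrite -natr_sum count_swap // natr_sum.
  have hk1 : (1 <= k <= h)%N by rewrite (leq_trans hj1 hjk) -ltnS ltn_ord.
  have hjj : (1 <= j <= k)%N by rewrite hj1 hjk.
  have := Ci k j hk1 hjj.
  by under eq_bigr do rewrite natrX.
have E1 : Q ^+ (k - l) * B = P ^+ (k - l) * (c ^+ (k - l) * B).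
  by rewrite /Q exprMn; ring.
have E2 : beta^-1 * (eps * n ^+ (k + j) * p ^+ (k * j)) =
    P ^+ (k - l) * (beta^-1 * eps * X).
  by rewrite -mulrA (@expr_split n p k j l hlj hjk) -/P -/X; ring.
rewrite E1 E2 ler_pM2l ?exprn_gt0 // in key.
have ch : c ^+ h * B <= c ^+ (k - l) * B.
  apply: ler_wpM2r => //; apply: ler_wiXn2l; [exact: ltW | exact: c1 |].
  by apply: leq_trans (leq_subr _ _) _; rewrite -ltnS ltn_ord.
have {}key := le_trans ch key.
have -> : eps / (beta * c ^+ h) * X = (c ^+ h)^-1 * (beta^-1 * eps * X).
  by rewrite invfM; ring.
by rewrite ler_pdivlMl ?exprn_gt0.
Qed.

Lemma step i eps c :
  0 < c -> c <= 1 -> 0 <= eps -> 0 < p -> 0 < n -> Cb i eps ->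
  Cb i.+1 (alpha + (h.+1)%:R * (c + eps / (beta * c ^+ h))).
Proof.
move=> c0 c1 eps0 p0 n0 Ci j l hj hl.
have hjh : (j <= h)%N by case/andP: hj.
have hl1 : (1 <= l)%N by case/andP: hl.
apply: le_trans (decomp i j l hjh) _.
have A := base_bound j l hl1.
set K := c + eps / (beta * c ^+ h).
have Bk : \sum_(k : 'I_h.+1) \sum_(S : j.-tuple T | condk i k S) N S ^+ l <=
          \sum_(k : 'I_h.+1) K * (n ^+ (j + l) * p ^+ (j * l)).
  by apply: ler_sum => k _; apply: perk.
rewrite sumr_const card_ord -mulr_natl in Bk.
apply: le_trans (lerD A Bk) _.
rewrite le_eqVlt; apply/orP; left; apply/eqP; rewrite /n /p; ring.
Qed.

Definition ff (x : R) := x * beta * (x / (3 * (h.+1)%:R)) ^+ h / (3 * (h.+1)%:R).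
Definition gg (m : nat) := iter m ff beta.

Lemma ff_props x : 0 < x -> x <= beta -> 0 < ff x /\ ff x <= x / 3.
Proof.
move=> x0 xb.
set D := 3 * (h.+1)%:R : R.
have D0 : 0 < D by rewrite mulr_gt0 ?ltr0n.
have D3 : 3 <= D.
  by rewrite /D ler_peMr // ler1n.
have c0 : 0 < x / D by rewrite divr_gt0.
have c1 : x / D <= 1.
  rewrite ler_pdivrMr // mul1r; apply: le_trans xb _; apply: le_trans (ltW hb1) _; lra.
have ch1 : (x / D) ^+ h <= 1 by rewrite exprn_ile1 // ltW.
have ch0 : 0 < (x / D) ^+ h by rewrite exprn_gt0.
split; first by rewrite /ff !mulr_gt0 ?invr_gt0.
rewrite /ff -/D.
have -> : x * beta * (x / D) ^+ h / D = (x * beta * (x / D) ^+ h) / D by [].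
rewrite ler_pdivrMr // .
have h1 : x * beta * (x / D) ^+ h <= x.
  rewrite -mulrA ler_piMr //; first exact: ltW.
  by apply: mulr_ile1 => //; apply: ltW.
apply: le_trans h1 _.
rewrite -mulrA ler_peMr //; first exact: ltW.
by rewrite ler_pdivlMl ?mulr1 //; lra.
Qed.

Lemma gg_props m : 0 < gg m /\ gg m <= beta /\ gg m.+1 <= gg m / 3.
Proof.
have H : forall m, 0 < gg m /\ gg m <= beta.
  elim=> [|k [IH1 IH2]]; first by split => //; rewrite /gg /=.
  have [a b] := ff_props _ IH1 IH2.
  rewrite /gg iterS -/(gg k); split => //.
  by apply: le_trans b _; apply: le_trans IH2; rewrite ler_pdivrMr //; lra.
have [a b] := H m; split => //; split => //.
by have [_ c] := ff_props _ a b; rewrite /gg iterS -/(gg m).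
Qed.


Lemma gg_anti m m' : (m <= m')%N -> gg m' <= gg m.
Proof.
elim: m' => [|m' IH] hm; first by move: hm; rewrite leqn0 => /eqP ->.
case: (leqP m m') => h2.
  apply: le_trans (IH h2).
  have [a [_ b]] := gg_props m'; apply: le_trans b _.
  by rewrite ler_pdivrMr //; lra.
by have -> : m = m'.+1 by apply/eqP; rewrite eqn_leq hm h2.
Qed.

Lemma main_ind : alpha = gg h -> 0 < p -> 0 < n ->
  forall i, (i <= h)%N -> Cb i (gg (h - i)).
Proof.
move=> ha p0 n0; elim=> [|i IH] hi.
  rewrite subn0 -ha => j l hj hl; case/andP: hl => hl1 _.
  exact: (base_bound j l hl1).
have IH' := IH (ltnW hi).
have hm : (h - i = (h - i.+1).+1)%N by rewrite subnSK.
set m := (h - i.+1)%N in hm *.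
rewrite hm in IH'.
have [g0 [gb g3]] := gg_props m.
have [g10 _] := gg_props m.+1.
set D := 3 * (h.+1)%:R : R.
have D0 : 0 < D by rewrite mulr_gt0 ?ltr0n.
set c := gg m / D.
have c0 : 0 < c by rewrite divr_gt0.
have c1 : c <= 1.
  rewrite ler_pdivrMr // mul1r; apply: le_trans gb _; apply: le_trans (ltW hb1) _.
  have : 1 <= (h.+1)%:R :> R by rewrite ler1n.
  rewrite /D; lra.
apply: (Cb_mono _ _ _ _ (step i (gg m.+1) c c0 c1 (ltW g10) p0 n0 IH')).
have E : gg m.+1 = gg m * beta * c ^+ h / D by [].
have ch0 : 0 < c ^+ h by rewrite exprn_gt0.
have E2 : gg m.+1 / (beta * c ^+ h) = c.
  rewrite E /c; field.
  by apply/andP; split; rewrite ?gt_eqF // ?exprn_gt0 // mulr_gt0 // exprn_gt0.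
rewrite E2.
have E3 : (h.+1)%:R * (c + c) = 2 / 3 * gg m.
  rewrite /c /D; field.
  rewrite gt_eqF //; have := ler0n R h; lra.
rewrite E3.
have hal : alpha <= gg m.+1 by rewrite ha; apply: gg_anti; rewrite /m subnSK // leq_subr.
lra.
Qed.
End Main.



Lemma degen (R : realType) (T : finType) (e : rel T) (r : nat) (S : seq T) :
  (0 < r)%N -> ~~ ((0 < pr R e r) && (0 < (#|T|%:R : R))) -> S != [::] ->
  #|NS e S| = 0%N.
Proof.
move=> r0 hnd; case: S => [//|u S] _.
case: (posnP #|T|) => hT.
  by apply/eqP; rewrite -leqn0 -hT max_card.
have n0 : 0 < (#|T|%:R : R) by rewrite ltr0n.
rewrite n0 andbT -leNgt in hnd.
have p0 : pr R e r = 0.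
  by apply/eqP; rewrite eq_le hnd /pr mulr_ge0 ?invr_ge0 ?ler0n ?powR_ge0.
move: p0; rewrite /pr => /eqP; rewrite mulf_eq0 invr_eq0 (gt_eqF n0) /= => /eqP.
move/powR_eq0_eq0 => /eqP; rewrite mulf_eq0 invr_eq0 (gt_eqF n0) /= => /eqP hs.
have hd : (deg e u)%:R ^+ r = 0 :> R.
  apply: (psumr_eq0P _ hs) => // v _; exact: exprn_ge0 (ler0n _ _).
move/eqP: hd; rewrite expf_eq0 r0 /= pnatr_eq0 => /eqP hd.
apply/eqP; rewrite -leqn0 -hd /deg; apply: subset_leq_card; apply/subsetP => v.
by rewrite !inE => /andP [].
Qed.

Theorem lemma3p4 (R : realType) (h r : nat) (beta : R) :
  (0 < r)%N -> (r <= h)%N -> 0 < beta -> beta < 1 ->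
  exists alpha : R, 0 < alpha /\ alpha < 1 /\
    forall (T : finType) (e : rel T), simple_graph e ->
    forall i j l : nat, (i <= h)%N -> (1 <= j <= h)%N -> (1 <= l <= j)%N ->
      \sum_(S : j.-tuple T | ~~ good e alpha beta h r i S) ((#|NS e S|)%:R : R) ^+ l
        <= beta * (#|T|)%:R ^+ (j + l) * (pr R e r) ^+ (j * l).
Proof.
move=> r0 rh b0 b1.
have [g0 [gb _]] := gg_props R beta h b0 b1 h.
have ga1 : gg R beta h h < 1 by apply: le_lt_trans gb b1.
exists (gg R beta h h); split => //; split => //.
move=> T e [sym _] i j l hi hj hl.
have rhs0 : 0 <= beta * (#|T|)%:R ^+ (j + l) * (pr R e r) ^+ (j * l).
  by rewrite !mulr_ge0 ?exprn_ge0 ?ler0n ?p_ge0 // ltW.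
case: (boolP ((0 < pr R e r) && (0 < (#|T|%:R : R)))) => [/andP [p0 n0] | hnd].
  have C := main_ind R T e (gg R beta h h) beta h r sym g0 ga1 b0 b1 erefl p0 n0 i hi j l hj hl.
  apply: le_trans C _.
  have [_ [gb' _]] := gg_props R beta h b0 b1 (h - i).
  rewrite -!mulrA; apply: ler_wpM2r => //.
  by rewrite mulr_ge0 ?exprn_ge0 ?ler0n ?p_ge0.
rewrite big1 // => S _.
rewrite (degen R T e r S r0 hnd); last by rewrite -size_eq0 size_tuple -lt0n; case/andP: hj.
by case/andP: hl => l0 _; rewrite expr0n; case: (l) l0.
Qed.
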